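(* Let $\triangle ABC$ be isosceles with base angles $\angle A=\angle B=80^\circ$ (so $\angle C=20^\circ$). For each side of $\triangle ABC$, consider an equilateral triangle of largest area contained in the closed triangle $\triangle ABC$ having one of its sides lying on that side. Then these three largest equilateral triangles (one for each of the sides $BC$, $CA$, $AB$) are congruent.
   Context: An equilateral triangle of largest area contained in $\triangle ABC$ with one side lying on a given side of $\triangle ABC$ is called the wedged equilateral triangle (WET) on that side; it need not have all three vertices on the boundary of $\triangle ABC$. *)

(* Defs.v *)
From Stdlib Require Import Reals Lra.
Open Scope R_scope.

Definition pt := (R * R)%type.

Definition dist (P Q : pt) : R :=
  sqrt ((fst P - fst Q) ^ 2 + (snd P - snd Q) ^ 2).

Definition cross (P Q S : pt) : R :=
  (fst Q - fst P) * (snd S - snd P) - (snd Q - snd P) * (fst S - fst P).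

Definition area (P Q S : pt) : R := Rabs (cross P Q S) / 2.

Definition angle (P V Q : pt) : R :=
  acos (((fst P - fst V) * (fst Q - fst V) + (snd P - snd V) * (snd Q - snd V))
        / (dist V P * dist V Q)).

Definition tri_region (P Q S : pt) (X : pt) : Prop :=
  exists a b c : R, 0 <= a /\ 0 <= b /\ 0 <= c /\ a + b + c = 1 /\
    fst X = a * fst P + b * fst Q + c * fst S /\
    snd X = a * snd P + b * snd Q + c * snd S.

Definition segment (P Q : pt) (X : pt) : Prop :=
  exists t : R, 0 <= t <= 1 /\
    fst X = (1 - t) * fst P + t * fst Q /\
    snd X = (1 - t) * snd P + t * snd Q.

Definition equilateral (P Q S : pt) : Prop :=
  0 < dist P Q /\ dist P Q = dist Q S /\ dist Q S = dist S P.

Definition wedged_candidate (A B C U V P Q S : pt) : Prop :=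
  equilateral P Q S /\
  (forall X, tri_region P Q S X -> tri_region A B C X) /\
  segment U V P /\ segment U V Q.

Definition WET (A B C U V P Q S : pt) : Prop :=
  wedged_candidate A B C U V P Q S /\
  forall P' Q' S', wedged_candidate A B C U V P' Q' S' ->
    area P' Q' S' <= area P Q S.

Definition congruent (P Q S P' Q' S' : pt) : Prop :=
  let d1 := dist P Q in let d2 := dist Q S in let d3 := dist S P in
  exists X Y Z : pt,
    ((X, Y, Z) = (P', Q', S') \/ (X, Y, Z) = (P', S', Q') \/
     (X, Y, Z) = (Q', P', S') \/ (X, Y, Z) = (Q', S', P') \/
     (X, Y, Z) = (S', P', Q') \/ (X, Y, Z) = (S', Q', P')) /\
    d1 = dist X Y /\ d2 = dist Y Z /\ d3 = dist Z X.

(* Main.v *)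
Require Import Defs.
From Stdlib Require Import Reals Lra Psatz.
Require Import Defs.
Open Scope R_scope.

Lemma dist2 P Q : dist P Q ^ 2 = (fst P - fst Q)^2 + (snd P - snd Q)^2.
Proof. unfold dist. apply pow2_sqrt. apply Rplus_le_le_0_compat; apply pow2_ge_0. Qed.

Lemma dist_pos P Q : 0 <= dist P Q.
Proof. unfold dist. apply sqrt_pos. Qed.

Lemma dist_sym P Q : dist P Q = dist Q P.
Proof. unfold dist. f_equal. ring. Qed.

Lemma sq_inj x y : 0 <= x -> 0 <= y -> x^2 = y^2 -> x = y.
Proof. intros. nra. Qed.

Definition is_aff (h : pt -> pt) := exists m11 m12 m21 m22 t1 t2 : R,
  forall X, h X = (m11 * fst X + m12 * snd X + t1, m21 * fst X + m22 * snd X + t2).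

Definition rigid (h : pt -> pt) := is_aff h /\ (forall P Q, dist (h P) (h Q) = dist P Q) /\
  (forall P Q S, area (h P) (h Q) (h S) = area P Q S).

Lemma tri_aff h P Q S X : is_aff h -> tri_region P Q S X -> tri_region (h P) (h Q) (h S) (h X).
Proof.
  intros [m11 [m12 [m21 [m22 [t1 [t2 Hh]]]]]] [a [b [c [Ha [Hb [Hc [Hs [Hx Hy]]]]]]]].
  exists a, b, c. rewrite !Hh; simpl. assert (c = 1 - a - b) by lra. subst c.
  repeat split; try lra; rewrite Hx, Hy; ring.
Qed.

Lemma seg_aff h P Q X : is_aff h -> segment P Q X -> segment (h P) (h Q) (h X).
Proof.
  intros [m11 [m12 [m21 [m22 [t1 [t2 Hh]]]]]] [t [Ht [Hx Hy]]].
  exists t. rewrite !Hh; simpl. repeat split; try lra; rewrite Hx, Hy; ring.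
Qed.

Lemma wc_map h k A B C U V P Q S : rigid h -> is_aff k -> (forall X, k (h X) = X) -> (forall Y, h (k Y) = Y) ->
  wedged_candidate A B C U V P Q S ->
  wedged_candidate (h A) (h B) (h C) (h U) (h V) (h P) (h Q) (h S).
Proof.
  intros [Ha [Hd Har]] Hk Hkh Hhk [[E1 [E2 E3]] [Hcont [S1 S2]]].
  split; [|split; [|split]].
  - unfold equilateral. rewrite !Hd. auto.
  - intros Y HY. rewrite <- (Hhk Y). apply tri_aff; auto. apply Hcont.
    rewrite <- (Hkh P), <- (Hkh Q), <- (Hkh S). apply tri_aff; auto.
  - apply seg_aff; auto.
  - apply seg_aff; auto.
Qed.

Lemma WET_map h k A B C U V P Q S : rigid h -> rigid k -> (forall X, k (h X) = X) -> (forall Y, h (k Y) = Y) ->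
  WET A B C U V P Q S -> WET (h A) (h B) (h C) (h U) (h V) (h P) (h Q) (h S).
Proof.
  intros Hh Hk Hkh Hhk [Hw Hmax]. split.
  - apply wc_map with k; auto. apply Hk.
  - intros P' Q' S' Hc'.
    assert (H' := wc_map k h _ _ _ _ _ _ _ _ Hk (proj1 Hh) Hhk Hkh Hc').
    rewrite !Hkh in H'. apply Hmax in H'.
    rewrite <- (Hhk P'), <- (Hhk Q'), <- (Hhk S'). destruct Hh as [_ [_ Har]]. rewrite !Har.
    exact H'.
Qed.

Lemma tri_rot P Q S X : tri_region P Q S X -> tri_region Q S P X.
Proof. intros [a [b [c H]]]. exists b, c, a. lra. Qed.
Lemma tri_swap P Q S X : tri_region P Q S X -> tri_region P S Q X.
Proof. intros [a [b [c H]]]. exists a, c, b. lra. Qed.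

Lemma seg_swap P Q X : segment P Q X -> segment Q P X.
Proof. intros [t H]. exists (1-t). lra. Qed.

Lemma WET_swap A B C U V P Q S : WET A B C U V P Q S -> WET A B C V U P Q S.
Proof.
  intros [[E [Hc [S1 S2]]] Hm]. split.
  - split; [exact E|split; [exact Hc|split; apply seg_swap; auto]].
  - intros P' Q' S' [E' [Hc' [S1' S2']]]. apply Hm. split; [exact E'|split; [exact Hc'|split; apply seg_swap; auto]].
Qed.

Lemma tri_convex A B C P Q S X : tri_region A B C P -> tri_region A B C Q -> tri_region A B C S ->
  tri_region P Q S X -> tri_region A B C X.
Proof.
  intros [a1 [b1 [c1 [? [? [? [E1 [HP1 HP2]]]]]]]] [a2 [b2 [c2 [? [? [? [E2 [HQ1 HQ2]]]]]]]]
         [a3 [b3 [c3 [? [? [? [E3 [HS1 HS2]]]]]]]] [a [b [c [? [? [? [E4 [HX1 HX2]]]]]]]].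
  exists (a*a1+b*a2+c*a3), (a*b1+b*b2+c*b3), (a*c1+b*c2+c*c3).
  split; [nra|split; [nra|split; [nra|split]]].
  - replace (a * a1 + b * a2 + c * a3 + (a * b1 + b * b2 + c * b3) + (a * c1 + b * c2 + c * c3))
      with (a*(a1+b1+c1) + b*(a2+b2+c2) + c*(a3+b3+c3)) by ring. rewrite E1, E2, E3. lra.
  - split; [rewrite HX1, HP1, HQ1, HS1 | rewrite HX2, HP2, HQ2, HS2]; ring.
Qed.

Definition dotp (V P Q : pt) := (fst P - fst V)*(fst Q - fst V) + (snd P - snd V)*(snd Q - snd V).

Lemma frame_e U V W e : 0 < dist U V -> (e = 1 \/ e = -1) -> e * cross U V W = Rabs (cross U V W) ->
  exists h k, rigid h /\ rigid k /\ (forall X, k (h X) = X) /\ (forall Y, h (k Y) = Y) /\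
    h U = (0,0) /\ h V = (dist U V, 0) /\
    h W = (dotp U V W / dist U V, Rabs (cross U V W) / dist U V).
Proof.
  intros Ha He Hec.
  set (a := dist U V) in *.
  assert (Ha2 : a^2 = (fst V - fst U)^2 + (snd V - snd U)^2) by (unfold a; rewrite dist2; ring).
  set (c1 := (fst V - fst U)/a). set (s1 := (snd V - snd U)/a).
  assert (Hn : c1^2 + s1^2 = 1).
  { unfold c1, s1. replace ((fst V - fst U) / a) with ((fst V - fst U) * / a) by reflexivity.
    replace ((snd V - snd U) / a) with ((snd V - snd U) * / a) by reflexivity.
    transitivity (((fst V - fst U)^2 + (snd V - snd U)^2) * / a^2). field. lra.
    rewrite <- Ha2. field. lra. }
  assert (Hee : e*e = 1) by (destruct He; subst; ring).
  assert (Hae : Rabs e = 1) by (destruct He; subst; [apply Rabs_R1|rewrite Rabs_left; lra]).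
  set (h := fun X : pt => (c1*(fst X - fst U) + s1*(snd X - snd U), e*(-s1*(fst X - fst U) + c1*(snd X - snd U)))).
  set (k := fun Y : pt => (fst U + c1 * fst Y - s1*e*snd Y, snd U + s1*fst Y + c1*e*snd Y)).
  exists h, k.
  split; [|split; [|split; [|split; [|split; [|split]]]]].
  - split; [|split].
    + exists c1, s1, (-e*s1), (e*c1), (-(c1*fst U + s1*snd U)), (e*(s1*fst U - c1*snd U)).
      intros X. unfold h. f_equal; ring.
    + intros P Q. unfold dist, h; simpl. f_equal.
      transitivity ((c1^2+s1^2)*((fst P - fst Q)^2 + (snd P - snd Q)^2) + (e*e-1)*(-s1*(fst P - fst Q) + c1*(snd P - snd Q))^2); [ring|rewrite Hn, Hee; ring].
    + intros P Q S. unfold area. f_equal.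
      replace (cross (h P) (h Q) (h S)) with (e * (c1^2+s1^2) * cross P Q S)
        by (unfold cross, h; simpl; ring).
      rewrite Hn, Rmult_1_r, Rabs_mult, Hae. ring.
  - split; [|split].
    + exists c1, (-s1*e), s1, (c1*e), (fst U), (snd U).
      intros X. unfold k. f_equal; ring.
    + intros P Q. unfold dist, k; simpl. f_equal.
      transitivity ((c1^2+s1^2)*((fst P - fst Q)^2 + e*e*(snd P - snd Q)^2)); [ring|rewrite Hn, Hee; ring].
    + intros P Q S. unfold area. f_equal.
      replace (cross (k P) (k Q) (k S)) with (e * (c1^2+s1^2) * cross P Q S)
        by (unfold cross, k; simpl; ring).
      rewrite Hn, Rmult_1_r, Rabs_mult, Hae. ring.
  - intros X. unfold h, k; simpl. destruct X as [x y]; simpl. f_equal.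
    + transitivity (fst U + (c1^2+s1^2)*(x - fst U) + s1*(s1*(x - fst U) - c1*(y - snd U))*(e*e-1)); [ring|]. rewrite Hn, Hee. ring.
    + transitivity (snd U + (c1^2+s1^2)*(y - snd U) + c1*(c1*(y - snd U) - s1*(x - fst U))*(e*e-1)); [ring|]. rewrite Hn, Hee. ring.
  - intros Y. unfold h, k; simpl. destruct Y as [u v]; simpl. f_equal.
    + transitivity ((c1^2+s1^2)*u); [ring|]. rewrite Hn. ring.
    + transitivity (e*e*(c1^2+s1^2)*v); [ring|]. rewrite Hn, Hee. ring.
  - unfold h. f_equal; ring.
  - unfold h, c1, s1. f_equal.
    + transitivity (((fst V - fst U)^2 + (snd V - snd U)^2)/a). field. lra. rewrite <- Ha2. field. lra.
    + field. lra.
  - unfold h, c1, s1. f_equal.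
    + unfold dotp. field. lra.
    + rewrite <- Hec. unfold cross. field. lra.
Qed.

Lemma frame U V W : 0 < dist U V ->
  exists h k, rigid h /\ rigid k /\ (forall X, k (h X) = X) /\ (forall Y, h (k Y) = Y) /\
    h U = (0,0) /\ h V = (dist U V, 0) /\
    h W = (dotp U V W / dist U V, Rabs (cross U V W) / dist U V).
Proof.
  intros Ha. destruct (Rle_dec 0 (cross U V W)) as [H|H].
  - apply frame_e with 1; auto. rewrite Rabs_pos_eq; auto; ring.
  - apply frame_e with (-1); auto. rewrite Rabs_left; [ring|lra].
Qed.

Lemma inT a p q x y : 0 < a -> 0 < q -> 0 <= y -> 0 <= x*q - p*y -> 0 <= q*a - q*x + (p-a)*y ->
  tri_region (0,0) (a,0) (p,q) (x,y).
Proof.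
  intros Ha Hq H1 H2 H3.
  exists (1 - (x*q - p*y)/(a*q) - y/q), ((x*q - p*y)/(a*q)), (y/q). simpl.
  split; [|split; [|split; [|split; [|split]]]].
  - replace (1 - (x * q - p * y) / (a * q) - y / q) with ((q*a - q*x + (p-a)*y)/(a*q)) by (field; lra).
    apply Rmult_le_pos; auto. left. apply Rinv_0_lt_compat. nra.
  - apply Rmult_le_pos; auto. left. apply Rinv_0_lt_compat. nra.
  - apply Rmult_le_pos; auto. left. apply Rinv_0_lt_compat. nra.
  - ring.
  - field. lra.
  - field. lra.
Qed.

Lemma fromT a p q X : 0 < a -> 0 < q -> tri_region (0,0) (a,0) (p,q) X ->
  0 <= snd X /\ 0 <= q*a - q*fst X + (p-a)*snd X.
Proof.
  intros Ha Hq [l [m [n [Hl [Hm [Hn [Hs [Hx Hy]]]]]]]]. simpl in *.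
  rewrite Hx, Hy. split.
  - nra.
  - replace (q * a - q * (l * 0 + m * a + n * p) + (p - a) * (l * 0 + m * 0 + n * q)) with (q*a*(1-m-n)) by ring.
    replace (1-m-n) with l by lra. apply Rmult_le_pos; nra.
Qed.

Lemma seg_x a P : segment (0,0) (a,0) P -> 0 < a -> snd P = 0 /\ 0 <= fst P <= a.
Proof.
  intros [t [Ht [Hx Hy]]] Ha. simpl in *. rewrite Hx, Hy. split; [ring|]. nra.
Qed.

Lemma bound a p q s0 r3 A' B' C' P Q S :
  r3 = sqrt 3 -> 0 < a -> 0 < q -> p*r3 <= q -> 0 < s0 -> s0 <= a ->
  (s0 = a \/ q*a - s0*(q/2 + (a-p)*r3/2) = 0) ->
  (forall X, tri_region A' B' C' X <-> tri_region (0,0) (a,0) (p,q) X) ->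
  wedged_candidate A' B' C' (0,0) (a,0) P Q S ->
  dist P Q <= s0 /\ area P Q S = dist P Q ^2 * r3 / 4.
Proof.
  intros Hr3 Ha Hq Hpq Hs0 Hs0a Hcase Hreg [[E1 [E2 E3]] [Hcont [S1 S2]]].
  assert (Hr2 : r3^2 = 3) by (rewrite Hr3; apply pow2_sqrt; lra).
  assert (Hr0 : 0 < r3) by (rewrite Hr3; apply sqrt_lt_R0; lra).
  assert (HS : tri_region (0,0) (a,0) (p,q) S).
  { apply Hreg, Hcont. exists 0, 0, 1. lra. }
  apply fromT in HS; auto.
  apply seg_x in S1; auto. apply seg_x in S2; auto.
  destruct P as [u1 z1], Q as [u2 z2], S as [x y]. simpl in *.
  destruct S1 as [Z1 S1], S2 as [Z2 S2]. subst z1 z2. clear Hr2.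
  assert (Hr2 : r3^2 = 3) by (rewrite Hr3; apply pow2_sqrt; lra).
  set (s := dist (u1,0) (u2,0)) in *.
  assert (Hs2 : s^2 = (u1-u2)^2) by (unfold s; rewrite dist2; simpl; ring).
  assert (Hq2 : s^2 = (u2-x)^2 + y^2) by (rewrite E2, dist2; simpl; ring).
  assert (Hp2 : s^2 = (x-u1)^2 + y^2) by (rewrite E2, E3, dist2; simpl; ring).
  assert (Hx : x = (u1+u2)/2).
  { assert ((u2-u1)*(u2+u1-2*x) = 0) by nra.
    apply Rmult_integral in H. destruct H; [nra|lra]. }
  assert (Hy : y = s*r3/2).
  { apply sq_inj; try lra. nra. replace ((s*r3/2)^2) with (s^2 * r3^2/4) by field. rewrite Hr2. nra. }
  assert (Hsu : s <= u1 + u2) by nra.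
  assert (Hsa : s <= a) by nra.
  assert (HK : 0 <= q*a - s*(q/2 + (a-p)*r3/2)) by nra.
  split.
  - destruct Hcase as [Hc|Hc]; [lra|].
    assert (0 < q/2 + (a-p)*r3/2) by nra. nra.
  - unfold area, cross; simpl.
    replace ((u2 - u1) * (y - 0) - (0 - 0) * (x - u1)) with ((u2-u1)*y) by ring.
    rewrite Rabs_mult, (Rabs_pos_eq y) by lra.
    assert (Rabs (u2 - u1) = s).
    { apply sq_inj. apply Rabs_pos. lra. rewrite pow2_abs. lra. }
    rewrite H, Hy. field.
Qed.

Lemma normN a p q s0 r3 A' B' C' :
  r3 = sqrt 3 -> 0 < a -> 0 < q -> p*r3 <= q -> 0 < s0 -> s0 <= a ->
  0 <= q*a - s0*(q/2 + (a-p)*r3/2) -> (s0 = a \/ q*a - s0*(q/2 + (a-p)*r3/2) = 0) ->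
  (forall X, tri_region A' B' C' X <-> tri_region (0,0) (a,0) (p,q) X) ->
  WET A' B' C' (0,0) (a,0) (0,0) (s0,0) (s0/2, s0*r3/2) /\
  forall P Q S, WET A' B' C' (0,0) (a,0) P Q S -> dist P Q = s0 /\ dist Q S = s0 /\ dist S P = s0.
Proof.
  intros Hr3 Ha Hq Hpq Hs0 Hs0a HK Hcase Hreg.
  assert (Hr2 : r3^2 = 3) by (rewrite Hr3; apply pow2_sqrt; lra).
  assert (Hr0 : 0 < r3) by (rewrite Hr3; apply sqrt_lt_R0; lra).
  assert (Hc0 : wedged_candidate A' B' C' (0,0) (a,0) (0,0) (s0,0) (s0/2, s0*r3/2)).
  { split; [|split; [|split]].
    - assert (D1 : dist (0,0) (s0,0) = s0).
      { apply sq_inj; [apply dist_pos|lra|]. rewrite dist2; cbn [fst snd]; ring. }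
      assert (D2 : dist (s0,0) (s0/2, s0*r3/2) = s0).
      { apply sq_inj; [apply dist_pos|lra|]. rewrite dist2; cbn [fst snd].
        replace ((0 - s0*r3/2)^2) with (s0^2*r3^2/4) by field. rewrite Hr2. field. }
      assert (D3 : dist (s0/2, s0*r3/2) (0,0) = s0).
      { apply sq_inj; [apply dist_pos|lra|]. rewrite dist2; cbn [fst snd].
        replace ((s0*r3/2 - 0)^2) with (s0^2*r3^2/4) by field. rewrite Hr2. field. }
      unfold equilateral. rewrite D1, D2, D3. lra.
    - intros X HX. apply Hreg. apply tri_convex with (0,0) (s0,0) (s0/2, s0*r3/2); auto.
      + apply inT; auto; nra.
      + apply inT; auto; nra.
      + apply inT; auto; nra.
    - exists 0. simpl. lra.
    - exists (s0/a). simpl. split; [split|split].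
      + apply Rmult_le_pos; [lra|left; apply Rinv_0_lt_compat; lra].
      + apply Rmult_le_reg_r with a; auto. unfold Rdiv. rewrite Rmult_assoc, Rinv_l; lra.
      + field. lra.
      + ring. }
  assert (Har0 : area (0,0) (s0,0) (s0/2, s0*r3/2) = s0^2 * r3/4).
  { unfold area, cross; simpl. rewrite Rabs_pos_eq; [field|nra]. }
  split.
  - split; auto. intros P' Q' S' Hc'.
    destruct (bound a p q s0 r3 A' B' C' P' Q' S') as [Hb Har]; auto.
    rewrite Har, Har0. pose proof (dist_pos P' Q'). nra.
  - intros P Q S [Hc Hm].
    destruct (bound a p q s0 r3 A' B' C' P Q S) as [Hb Har]; auto.
    specialize (Hm _ _ _ Hc0). rewrite Har, Har0 in Hm.
    assert (dist P Q = s0) by (pose proof (dist_pos P Q); nra).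
    destruct Hc as [[E1 [E2 E3]] _]. lra.
Qed.

Lemma side A B C U V W a p q s0 :
  (forall X, tri_region A B C X <-> tri_region U V W X) -> 0 < dist U V ->
  a = dist U V -> p = dotp U V W / dist U V -> q = Rabs (cross U V W) / dist U V ->
  0 < q -> p*sqrt 3 <= q -> 0 < s0 -> s0 <= a ->
  0 <= q*a - s0*(q/2 + (a-p)*sqrt 3/2) -> (s0 = a \/ q*a - s0*(q/2 + (a-p)*sqrt 3/2) = 0) ->
  (exists P Q S, WET A B C U V P Q S) /\
  forall P Q S, WET A B C U V P Q S -> dist P Q = s0 /\ dist Q S = s0 /\ dist S P = s0.
Proof.
  intros Hreg HUV Ea Ep Eq Hq Hpq Hs0 Hs0a HK Hcase.
  destruct (frame U V W HUV) as [h [k [Hh [Hk [Hkh [Hhk [HU [HV HW]]]]]]]].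
  rewrite <- Ea, <- Ep, <- Eq in *.
  assert (Hreg' : forall X, tri_region (h A) (h B) (h C) X <-> tri_region (0,0) (a,0) (p,q) X).
  { intros X. rewrite <- HU, <- HV, <- HW. split; intros HX.
    - rewrite <- (Hhk X). apply tri_aff; [apply Hh|]. apply Hreg.
      rewrite <- (Hkh A), <- (Hkh B), <- (Hkh C). apply tri_aff; [apply Hk|auto].
    - rewrite <- (Hhk X). apply tri_aff; [apply Hh|]. apply Hreg.
      rewrite <- (Hkh U), <- (Hkh V), <- (Hkh W). apply tri_aff; [apply Hk|auto]. }
  destruct (normN a p q s0 (sqrt 3) (h A) (h B) (h C)) as [N1 N2]; auto; try lra.
  split.
  - exists (k (0,0)), (k (s0,0)), (k (s0/2, s0*sqrt 3/2)).
    rewrite <- (Hkh A), <- (Hkh B), <- (Hkh C), <- (Hkh U), <- (Hkh V).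
    apply (WET_map k h); auto. rewrite HU, HV. auto.
  - intros P Q S HW'. apply (WET_map h k) in HW'; auto. rewrite HU, HV in HW'.
    apply N2 in HW'. destruct Hh as [_ [Hd _]]. rewrite !Hd in HW'. auto.
Qed.
Lemma consts : let co := cos (4*PI/9) in let si := sin (4*PI/9) in let r3 := sqrt 3 in
  0 < co /\ 0 < si /\ co^2 + si^2 = 1 /\ 0 < si - r3*co /\ 2*co < 1 /\
  si - co*si - (r3/2)*(1-2*co^2) = 0 /\ 0 < r3 /\ r3^2 = 3.
Proof.
  intros co si r3.
  assert (Hr : r3^2 = 3) by (apply pow2_sqrt; lra).
  assert (Hr0 : 0 < r3) by (apply sqrt_lt_R0; lra).
  pose proof PI_RGT_0 as Hpi.
  set (C := cos (PI/9)). set (S := sin (PI/9)).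
  assert (HS : 0 < S) by (apply sin_gt_0; lra).
  assert (HC : 0 < C) by (apply cos_gt_0; lra).
  assert (HCS : S^2 + C^2 = 1) by (pose proof (sin2_cos2 (PI/9)); unfold Rsqr in *; unfold S, C; nra).
  assert (Hsi : si = S/2 + C*r3/2).
  { unfold si. replace (4*PI/9) with (PI/9 + PI/3) by field. rewrite sin_plus, sin_PI3, cos_PI3. fold S C r3. field. }
  assert (Hco : co = C/2 - S*r3/2).
  { unfold co. replace (4*PI/9) with (PI/9 + PI/3) by field. rewrite cos_plus, sin_PI3, cos_PI3. fold S C r3. field. }
  assert (Hcs : co^2 + si^2 = 1) by (pose proof (sin2_cos2 (4*PI/9)); unfold Rsqr in *; unfold si, co; nra).
  assert (H2c : co*co - si*si = - C).
  { unfold co, si. rewrite <- cos_2a. replace (2*(4*PI/9)) with (PI - PI/9) by field. rewrite Rtrigo_facts.cos_pi_minus. reflexivity. }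
  assert (H2s : 2*si*co = S).
  { unfold co, si. rewrite <- sin_2a. replace (2*(4*PI/9)) with (PI - PI/9) by field. rewrite sin_PI_x. reflexivity. }
  assert (Hco0 : 0 < co) by (apply cos_gt_0; lra).
  assert (Hsi0 : 0 < si) by (apply sin_gt_0; lra).
  repeat split; auto.
  - rewrite Hsi, Hco. nra.
  - rewrite Hco. nra.
  - nra.
Qed.

Lemma lagrange V P Q : dotp V P Q ^2 + cross V P Q ^2 = dist V P ^2 * dist V Q ^2.
Proof. rewrite !dist2. unfold dotp, cross. ring. Qed.

Lemma angle_cos P V Q : 0 < dist V P -> 0 < dist V Q -> angle P V Q = 4*PI/9 ->
  dotp V P Q = dist V P * dist V Q * cos (4*PI/9).
Proof.
  intros H1 H2 Ha. unfold angle in Ha. fold (dotp V P Q) in Ha.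
  set (z := dotp V P Q / (dist V P * dist V Q)) in *.
  assert (Hz : dotp V P Q = z * (dist V P * dist V Q)) by (unfold z; field; lra).
  assert (Hl := lagrange V P Q).
  assert (z^2 <= 1).
  { assert (0 < (dist V P * dist V Q)^2) by (apply pow_lt; apply Rmult_lt_0_compat; auto).
    apply Rmult_le_reg_r with ((dist V P * dist V Q)^2); auto.
    replace (z^2 * (dist V P * dist V Q)^2) with (dotp V P Q ^2) by (rewrite Hz; ring).
    pose proof (pow2_ge_0 (cross V P Q)). nra. }
  assert (cos (acos z) = z) by (apply cos_acos; nra).
  rewrite Ha in H0. rewrite Hz, H0. ring.
Qed.

Lemma sq0 x : x^2 = 0 -> x = 0.
Proof. intros H. destruct (Req_dec x 0); auto. exfalso. apply (pow_nonzero x 2); auto. Qed.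

Lemma cross_dist P Q S : cross P Q S <> 0 -> 0 < dist P Q.
Proof.
  intros H. destruct (dist_pos P Q) as [|E]; auto. exfalso. apply H.
  assert (dist P Q ^2 = 0) by (rewrite <- E; ring). rewrite dist2 in H0.
  pose proof (pow2_ge_0 (fst P - fst Q)). pose proof (pow2_ge_0 (snd P - snd Q)).
  assert (E1 : (fst P - fst Q)^2 = 0) by lra. assert (E2 : (snd P - snd Q)^2 = 0) by lra.
  apply sq0 in E1. apply sq0 in E2.
  assert (G1 : fst P = fst Q) by lra. assert (G2 : snd P = snd Q) by lra.
  unfold cross. rewrite G1, G2. ring.
Qed.

Lemma congr_of P Q S P' Q' S' s : dist P Q = s /\ dist Q S = s /\ dist S P = s ->
  dist P' Q' = s /\ dist Q' S' = s /\ dist S' P' = s -> congruent P Q S P' Q' S'.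
Proof.
  intros [H1 [H2 H3]] [H1' [H2' H3']]. unfold congruent. exists P', Q', S'.
  split; [left; reflexivity|]. lra.
Qed.

Theorem mainTheorem5 (A B C : pt) :
  cross A B C <> 0 ->
  angle B A C = 4 * PI / 9 ->
  angle A B C = 4 * PI / 9 ->
  (exists P Q S, WET A B C B C P Q S) /\
  (exists P Q S, WET A B C C A P Q S) /\
  (exists P Q S, WET A B C A B P Q S) /\
  (forall P1 Q1 S1 P2 Q2 S2 P3 Q3 S3 : pt,
     WET A B C B C P1 Q1 S1 ->
     WET A B C C A P2 Q2 S2 ->
     WET A B C A B P3 Q3 S3 ->
     congruent P1 Q1 S1 P2 Q2 S2 /\ congruent P2 Q2 S2 P3 Q3 S3 /\
     congruent P1 Q1 S1 P3 Q3 S3).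
Proof.
  intros Hcr HA HB.
  pose proof consts as K. cbv zeta in K.
  destruct K as [Fco [Fsi [Fcs [F4 [F5 [F6 [Fr0 Fr2]]]]]]].
  set (co := cos (4*PI/9)) in *. set (si := sin (4*PI/9)) in *. set (r3 := sqrt 3) in *.
  assert (Hcr1 : cross A C B = - cross A B C) by (unfold cross; ring).
  assert (Hcr2 : cross B C A = cross A B C) by (unfold cross; ring).
  assert (Hcr3 : cross B A C = - cross A B C) by (unfold cross; ring).
  assert (Hc : 0 < dist A B) by (apply (cross_dist A B C); auto).
  assert (Hb : 0 < dist A C) by (apply (cross_dist A C B); rewrite Hcr1; lra).
  assert (Hb' : 0 < dist B C) by (apply (cross_dist B C A); rewrite Hcr2; auto).
  assert (H1 := angle_cos B A C Hc Hb HA).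
  assert (HBA : 0 < dist B A) by (rewrite dist_sym; auto).
  assert (H2 := angle_cos A B C HBA Hb' HB).
  rewrite (dist_sym B A) in H2.
  assert (L1 := lagrange A B C). assert (L2 := lagrange B A C).
  rewrite (dist_sym B A), Hcr3 in L2.
  assert (Hsum : dotp A B C + dotp B A C = dist A B ^2) by (rewrite dist2; unfold dotp; ring).
  set (c := dist A B) in *. set (b := dist A C) in *. set (b' := dist B C) in *.
  set (X := cross A B C) in *.
  fold co in H1, H2. assert (EX1 : X^2 = c^2*b^2*si^2) by (rewrite H1 in L1; replace (si^2) with (1-co^2) by lra; nra).
  assert (EX2 : X^2 = c^2*b'^2*si^2) by (rewrite H2 in L2; replace (si^2) with (1-co^2) by lra; nra).
  assert (Ebb : b' = b).
  { apply sq_inj; try lra. assert (0 < c^2*si^2) by (apply Rmult_lt_0_compat; apply pow_lt; auto).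
    apply Rmult_eq_reg_l with (c^2*si^2); [|lra]. nra. }
  rewrite Ebb in *.
  assert (Ecb : c = 2*b*co).
  { rewrite H1, H2 in Hsum. apply Rmult_eq_reg_l with c; [|lra]. nra. }
  assert (EabsX : Rabs X = c*b*si).
  { apply sq_inj. apply Rabs_pos. apply Rmult_le_pos; [apply Rmult_le_pos|]; lra.
    rewrite pow2_abs, EX1. ring. }
  assert (Hcb : c <= b) by nra.
  assert (Kz : c*si*b - c*(c*si/2 + (b - c*co)*r3/2) = 0).
  { rewrite Ecb. transitivity (2*b*co*b*(si - co*si - (r3/2)*(1-2*co^2))).
    { field. }
    rewrite F6. ring. }
  assert (EBC : dist B C = b) by (rewrite <- Ebb; reflexivity).
  destruct (side A B C B C A b (c*co) (c*si) c) as [EBC' DBC]; fold r3; auto.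
  { intros Y; split; intros HY; [apply tri_rot; auto|apply tri_rot, tri_rot; auto]. }
  { rewrite EBC; lra. }
  { rewrite EBC. replace (dotp B C A) with (dotp B A C) by (unfold dotp; ring). rewrite H2. field. lra. }
  { rewrite EBC, Hcr2. rewrite EabsX. field. lra. }
  { apply Rmult_lt_0_compat; lra. }
  { nra. }
  { rewrite Kz; lra. }
  destruct (side A B C A C B b (c*co) (c*si) c) as [ECA DCA]; fold r3; auto.
  { intros Y; split; intros HY; apply tri_swap; auto. }
  { change (dist A C) with b. replace (dotp A C B) with (dotp A B C) by (unfold dotp; ring). rewrite H1. field. lra. }
  { change (dist A C) with b. rewrite Hcr1, Rabs_Ropp. rewrite EabsX. field. lra. }
  { apply Rmult_lt_0_compat; lra. }
  { nra. }
  { rewrite Kz; lra. }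
  destruct (side A B C A B C c (b*co) (b*si) c) as [EAB DAB]; fold r3; auto.
  { intros Y; split; auto. }
  { change (dist A B) with c. rewrite H1. field. lra. }
  { change (dist A B) with c. change (cross A B C) with X; rewrite EabsX. field. lra. }
  { apply Rmult_lt_0_compat; lra. }
  { nra. }
  { lra. }
  { replace (b * si * c - c * (b * si / 2 + (c - b * co) * r3 / 2)) with (c*b*(si - r3*co)/2).
    { assert (0 < c*b) by (apply Rmult_lt_0_compat; lra). nra. }
    rewrite Ecb. field. }
  split; [auto|split; [|split; [auto|]]].
  - destruct ECA as [P [Q [S HW]]]. exists P, Q, S. apply WET_swap. auto.
  - intros P1 Q1 S1 P2 Q2 S2 P3 Q3 S3 W1 W2 W3.
    apply WET_swap in W2.
    apply DBC in W1. apply DCA in W2. apply DAB in W3.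
    split; [|split]; eapply congr_of; eauto.
Qed.
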